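(* Let $m\ge2$, let $\mathbb{A}=(a_{i_1\ldots i_m})$ be a nonnegative tensor of order $m$ and dimension $n$, and let $\mathbb{B}=(b_{i_1\ldots i_{m+1}})$ be the nonnegative tensor of order $m+1$ and dimension $n$ with $b_{i_1\ldots i_mi_{m+1}}=a_{i_1\ldots i_m}$ if $i_{m+1}=i_m$ and $b_{i_1\ldots i_mi_{m+1}}=0$ otherwise. Then (i) for every $j\in[n]$, $\mathbb{A}$ is $j$-primitive if and only if $\mathbb{B}$ is $j$-primitive, and in that case $\gamma_j(\mathbb{B})=\gamma_j(\mathbb{A})$; (ii) $\mathbb{A}$ is primitive if and only if $\mathbb{B}$ is primitive, and then $\gamma(\mathbb{B})=\gamma(\mathbb{A})$.
   Context: General product of dimension-$n$ tensors: for $\mathbb{A}$ of order $m\ge2$ and $\mathbb{C}$ of order $k\ge1$, $(\mathbb{A}\mathbb{C})_{i\alpha_1\ldots\alpha_{m-1}}=\sum_{i_2,\ldots,i_m=1}^n a_{ii_2\ldots i_m}c_{i_2\alpha_1}\cdots c_{i_m\alpha_{m-1}}$ ($\alpha_l\in[n]^{k-1}$); it is associative and $\mathbb{A}^k$ denotes the $k$-fold power. The majorization matrix is $(M(\mathbb{C}))_{ij}=c_{ij\ldots j}$. A nonnegative tensor $\mathbb{A}$ is primitive if $M(\mathbb{A}^r)>0$ entrywise for some $r\ge1$, and the least such $r$ is $\gamma(\mathbb{A})$. For $j\in[n]$, $\mathbb{A}$ is $j$-primitive if there is $k\ge1$ with $(M(\mathbb{A}^k))_{uj}>0$ for all $u\in[n]$;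 the least such $k$ is $\gamma_j(\mathbb{A})$. *)

(* Defs.v *)
From mathcomp Require Import all_boot all_order all_algebra.
Set Implicit Arguments. Unset Strict Implicit. Unset Printing Implicit Defensive.
Import Order.TTheory GRing.Theory Num.Theory.
Local Open Scope ring_scope.

(* A tensor of dimension n with entries in R is represented by its entry
   function on index sequences  [:: i_1; ...; i_k]  (i_l : 'I_n); its order k
   is carried separately (only sequences of length k are meaningful). *)
Definition tensor (R : Type) (n : nat) := seq 'I_n -> R.

(* General product: A of order m, C of order k;
   (AC)_{i alpha_1 ... alpha_{m-1}} =
      sum_{i_2..i_m} a_{i i_2..i_m} c_{i_2 alpha_1} ... c_{i_m alpha_{m-1}},
   where alpha_l is the l-th block of length k-1 of the tail of the index. *)
Definition tmul (R : realFieldType) (n m k : nat) (A C : tensor R n) : tensor R n :=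
  fun s => match s with
  | [::] => 0
  | i :: rest =>
      \sum_(t : (m.-1).-tuple 'I_n)
        A (i :: t) *
        \prod_(l < m.-1) C (tnth t l :: take k.-1 (drop (l * k.-1) rest))
  end.

(* tpow_aux m A r = A^(r+1), whose order is (m-1)^(r+1) + 1. *)
Fixpoint tpow_aux (R : realFieldType) (n m : nat) (A : tensor R n) (r : nat)
  : tensor R n :=
  match r with
  | 0 => A
  | r'.+1 => tmul m ((m.-1) ^ r + 1) A (tpow_aux m A r')
  end.

(* k-fold power A^k (k >= 1); order (m-1)^k + 1. *)
Definition tpow (R : realFieldType) (n m : nat) (A : tensor R n) (k : nat) :=
  tpow_aux m A k.-1.

Definition majmx (R : realFieldType) (n k : nat) (C : tensor R n) (i j : 'I_n) : R :=
  C (i :: nseq k.-1 j).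

Definition nonneg_tensor (R : realFieldType) (n m : nat) (A : tensor R n) :=
  forall s : seq 'I_n, size s = m -> 0 <= A s.

Definition pos_pow (R : realFieldType) (n m : nat) (A : tensor R n) (r : nat) :=
  forall i j : 'I_n, 0 < majmx ((m.-1) ^ r + 1) (tpow m A r) i j.

Definition primitive (R : realFieldType) (n m : nat) (A : tensor R n) :=
  exists r, (1 <= r)%N /\ pos_pow m A r.

Definition is_gamma (R : realFieldType) (n m : nat) (A : tensor R n) (r : nat) :=
  [/\ (1 <= r)%N, pos_pow m A r &
      forall r', (1 <= r')%N -> pos_pow m A r' -> (r <= r')%N].

Definition jpos_pow (R : realFieldType) (n m : nat) (A : tensor R n) (j : 'I_n)
    (k : nat) :=
  forall u : 'I_n, 0 < majmx ((m.-1) ^ k + 1) (tpow m A k) u j.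

Definition j_primitive (R : realFieldType) (n m : nat) (A : tensor R n) (j : 'I_n) :=
  exists k, (1 <= k)%N /\ jpos_pow m A j k.

Definition is_gamma_j (R : realFieldType) (n m : nat) (A : tensor R n) (j : 'I_n)
    (k : nat) :=
  [/\ (1 <= k)%N, jpos_pow m A j k &
      forall k', (1 <= k')%N -> jpos_pow m A j k' -> (k <= k')%N].

(* The order-(m+1) tensor B with b_{i_1..i_m i_{m+1}} = a_{i_1..i_m} if
   i_{m+1} = i_m and 0 otherwise (i_m, i_{m+1} are positions m-1, m). *)
Definition extend_tensor (R : realFieldType) (n m : nat) (A : tensor R n)
  : tensor R n :=
  fun s => if nth 0%N (map val s) m.-1 == nth 0%N (map val s) m
           then A (take m s) else 0.

(* Main.v *)
Require Import Defs.
From mathcomp Require Import all_boot all_order all_algebra.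
From mathcomp Require Import zify.
Import Order.TTheory GRing.Theory Num.Theory.
Local Open Scope ring_scope.
Set Implicit Arguments. Unset Strict Implicit.

Definition majP (R : realFieldType) (n p : nat) (X : tensor R n) (r : nat)
  (i j : 'I_n) : R := tpow_aux p X r (i :: nseq ((p.-1)^(r.+1)) j).

Lemma majmxE (R : realFieldType) (n p : nat) (X : tensor R n) k i j :
  (0 < k)%N -> majmx ((p.-1)^k + 1) (tpow p X k) i j = majP p X k.-1 i j.
Proof. by case: k => // k _; rewrite /majmx /tpow /majP addn1. Qed.

Lemma majP_rec (R : realFieldType) (n p : nat) (X : tensor R n) r i j :
  majP p X r.+1 i j = \sum_(t : (p.-1).-tuple 'I_n)
     X (i :: t) * \prod_(l < p.-1) majP p X r (tnth t l) j.
Proof.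
rewrite /majP /= /tmul; apply: eq_bigr => t _; congr (_ * _).
apply: eq_bigr => l _; congr (tpow_aux _ _ _ (_ :: _)).
rewrite addn1 /= drop_nseq take_nseq //.
have := ltn_ord l; set q := (p.-1 ^ r.+1)%N; rewrite expnS -/q => hl.
rewrite -mulnBl; have : (1 <= p.-1 - l)%N by lia.
by move=> h; rewrite -{1}(mul1n q) leq_mul2r h orbT.
Qed.

Lemma majP_ge0 (R : realFieldType) (n p : nat) (X : tensor R n) r i j :
  (0 < p)%N -> nonneg_tensor p X -> 0 <= majP p X r i j.
Proof.
move=> hp hX; elim: r i j => [|r IH] i j.
  by apply: hX; rewrite /= size_nseq expn1 prednK.
rewrite majP_rec; apply: sumr_ge0 => t _; apply: mulr_ge0.
  by apply: hX; rewrite /= size_tuple prednK.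
by apply: prodr_ge0 => l _; apply: IH.
Qed.

Lemma majP_pos (R : realFieldType) (n p : nat) (X : tensor R n) r i j :
  (0 < p)%N -> nonneg_tensor p X ->
  (0 < majP p X r.+1 i j) <-> exists s : seq 'I_n,
    [/\ size s = p.-1, 0 < X (i :: s) & all (fun x => 0 < majP p X r x j) s].
Proof.
move=> hp hX.
have Xge0 (t : (p.-1).-tuple 'I_n) : 0 <= X (i :: t).
  by apply: hX; rewrite /= size_tuple prednK.
have Pge0 (t : (p.-1).-tuple 'I_n) : 0 <= \prod_(l < p.-1) majP p X r (tnth t l) j.
  by apply: prodr_ge0 => l _; apply: majP_ge0.
rewrite majP_rec; split.
  move=> H.
  case: (pickP (fun t : (p.-1).-tuple 'I_n =>
      0 < X (i :: t) * \prod_(l < p.-1) majP p X r (tnth t l) j)) => [t Ht|H0]; last first.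
    move: H; rewrite big1 ?ltxx // => t _.
    apply/eqP; rewrite eq_le mulr_ge0 // andbT.
    by rewrite leNgt H0.
  have : X (i :: t) * \prod_(l < p.-1) majP p X r (tnth t l) j != 0.
    by rewrite gt_eqF.
  rewrite mulf_eq0 negb_or => /andP [h1 h2].
  exists t; split; first by rewrite size_tuple.
    by rewrite lt_def h1 Xge0.
  apply/all_tnthP => l; rewrite lt_def majP_ge0 // andbT.
  apply/negP => /eqP h0; move/prodf_eq0: h2; apply; exists l => //.
  by rewrite h0.
case=> s [hs hX0 hall].
have hs' : size s == p.-1 by apply/eqP.
pose t := Tuple hs'.
rewrite (bigD1 t) //=; apply: ltr_wpDr.
  by apply: sumr_ge0 => u _; apply: mulr_ge0.
apply: mulr_gt0 => //; apply: prodr_gt0 => l _.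
by move: hall; rewrite -[s]/(tval t) => /all_tnthP; apply.
Qed.

Lemma B_nonneg (R : realFieldType) (n m : nat) (A : tensor R n) :
  nonneg_tensor m A -> nonneg_tensor m.+1 (extend_tensor m A).
Proof.
move=> hA s hs; rewrite /extend_tensor; case: ifP => // _.
by apply: hA; rewrite size_take hs ltnSn.
Qed.

Lemma B_base (R : realFieldType) (n m : nat) (A : tensor R n) i j :
  (2 <= m)%N -> majP m.+1 (extend_tensor m A) 0 i j = majP m A 0 i j.
Proof.
move=> hm; rewrite /majP /= /extend_tensor !expn1.
case: m hm => // m hm /=.
rewrite map_nseq; case: m hm => // m _ /=.
change ((if nth 0%N (nseq m.+2 (val j)) m == nth 0%N (nseq m.+1 (val j)) m
   then A (i :: take m.+1 (nseq m.+2 j)) else 0) = A (i :: nseq m.+1 j)).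
by rewrite !nth_nseq ltnSn ltnW // eqxx take_nseq.
Qed.

Lemma posAB (R : realFieldType) (n m : nat) (A : tensor R n) r i j :
  (2 <= m)%N -> nonneg_tensor m A ->
  (0 < majP m A r i j) = (0 < majP m.+1 (extend_tensor m A) r i j).
Proof.
move=> hm hA; have hm0 : (0 < m)%N by lia.
have hB := B_nonneg hA.
elim: r i j => [|r IH] i j; first by rewrite B_base.
apply/idP/idP.
  move/(majP_pos r i j hm0 hA) => [s [hs hX hall]].
  apply/(majP_pos r i j (ltn0Sn m) hB).
  case/lastP: s hs hX hall => [|s y] hs hX hall; first by move: hs => /= ; lia.
  exists (rcons (rcons s y) y); split.
  - by move: hs; rewrite !size_rcons; lia.
  - rewrite /extend_tensor /=.
    have hsz : size s = m.-2 by move: hs; rewrite size_rcons; lia.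
    rewrite (_ : m.-1 = (size s).+1); last by lia.
    rewrite (_ : m = (size s).+2); last by lia.
    rewrite /= !map_rcons !nth_rcons !size_rcons size_map ltnn ltnSn !eqxx /= ltnn eqxx.
    by rewrite -(size_rcons s y) -cats1 -cats1 take_size_cat // cats1.
  - have hallB : all (fun x => 0 < majP m.+1 (extend_tensor m A) r x j) (rcons s y).
      by rewrite (eq_all (a2 := fun x => 0 < majP m A r x j)) // => x /=; rewrite IH.
    by rewrite all_rcons hallB andbT; move: hallB; rewrite all_rcons => /andP[->].
move/(majP_pos r i j (ltn0Sn m) hB) => [s [hs hX hall]].
apply/(majP_pos r i j hm0 hA).
case/lastP: s hs hX hall => [|s z] hs hX hall; first by move: hs => /= ; lia.
case/lastP: s hs hX hall => [|s y] hs hX hall; first by move: hs => /=; lia.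
have hsz : size s = m.-2 by move: hs; rewrite !size_rcons /=; lia.
move: hX; rewrite /extend_tensor.
rewrite (_ : m.-1 = (size s).+1); last by lia.
rewrite {1 2}(_ : m = (size s).+2); last by lia.
rewrite /= !map_rcons !nth_rcons !size_rcons !size_map ltnn ltnSn eqxx /=.
rewrite ltnn eqxx.
case: eqP => [_|]; last by rewrite ltxx.
rewrite -(size_rcons s y) -cats1 -cats1 take_size_cat // cats1 => hX.
exists (rcons s y); split => //.
move: hall; rewrite all_rcons => /andP[_].
by rewrite (eq_all (a2 := fun x => 0 < majP m.+1 (extend_tensor m A) r x j)) // => x /=; rewrite IH.
Qed.

Unset Implicit Arguments. Set Strict Implicit.

Theorem proposition4p9 (R : realFieldType) (n m : nat) (A : tensor R n) :
  (2 <= m)%N -> nonneg_tensor m A ->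
  let B := extend_tensor m A in
  (forall j : 'I_n,
     (j_primitive m A j <-> j_primitive m.+1 B j) /\
     (j_primitive m A j ->
        forall k, is_gamma_j m.+1 B j k <-> is_gamma_j m A j k)) /\
  ((primitive m A <-> primitive m.+1 B) /\
   (primitive m A -> forall r, is_gamma m.+1 B r <-> is_gamma m A r)).
Proof.
move=> hm hA B.
have key k (u j : 'I_n) : (1 <= k)%N ->
   (0 < majmx ((m.-1)^k+1) (tpow m A k) u j) =
   (0 < majmx ((m.+1.-1)^k+1) (tpow m.+1 B k) u j).
  by move=> hk; rewrite !majmxE //; apply: posAB.
have jpE j k : (1 <= k)%N -> jpos_pow m A j k <-> jpos_pow m.+1 B j k.
  by move=> hk; split => h u; [rewrite -key | rewrite key].
have pE k : (1 <= k)%N -> pos_pow m A k <-> pos_pow m.+1 B k.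
  by move=> hk; split => h u v; [rewrite -key | rewrite key].
split.
  move=> j; split.
    by split => -[k [hk h]]; exists k; split => //; apply/(jpE j k hk).
  move=> _ k; split => -[hk h1 h2]; split => //.
  - by apply/(jpE j k hk).
  - by move=> k' hk' h'; apply: h2 => //; apply/(jpE j k' hk').
  - by apply/(jpE j k hk).
  - by move=> k' hk' h'; apply: h2 => //; apply/(jpE j k' hk').
split.
  by split => -[k [hk h]]; exists k; split => //; apply/(pE k hk).
move=> _ k; split => -[hk h1 h2]; split => //.
- by apply/(pE k hk).
- by move=> k' hk' h'; apply: h2 => //; apply/(pE k' hk').
- by apply/(pE k hk).
- by move=> k' hk' h'; apply: h2 => //; apply/(pE k' hk').
Qed.
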